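(* Let $\{c_n\}_{n\ge1}$ be a real sequence with $\sum_{n=1}^\infty |c_n|<+\infty$, such that $\sum_{n=N}^{\infty}(c_n)^2>0$ and $\sum_{n=N}^\infty c_n\neq 0$ for every $N\ge1$. Let $f(x):=\sum_{n=1}^\infty c_n\varphi^{(n)}(x)$ and $f_N(x):=\sum_{n=1}^{N-1}c_n\varphi^{(n)}(x)$ for $x\in[0,1]$, $N=1,2,\dots$. Then $$\lim_{N\to\infty}\int_0^1\left(\frac{f(x)-f_N(x)}{\frac12\sum_{n=N}^\infty c_n}-1\right)^2dx=0$$ holds if and only if $$\lim_{N\to\infty}\frac{\sum_{n=N}^\infty (c_n)^2}{\left(\sum_{n=N}^\infty c_n\right)^2}=0.$$ Moreover, under this last condition, for every $\varepsilon>0$, $$\lim_{N\to\infty}P\left(\left\{x\in[0,1]: 1-\varepsilon\le \frac{f(x)-f_N(x)}{\frac12\sum_{n=N}^\infty c_n}\le 1+\varepsilon\right\}\right)=1.$$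
   Context: The tent map on $[0,1]$ is $\varphi(x)=2x$ for $x\in[0,1/2]$ and $\varphi(x)=2(1-x)$ for $x\in[1/2,1]$; it is extended to $\mathbb{R}$ by $\varphi(x):=\varphi(x-[x])$ (period 1), and $\varphi^{(n)}$ denotes the $n$-fold iterate of $\varphi$, so that $\varphi^{(n)}(x)=\varphi(2^{n-1}x)$. $P$ denotes Lebesgue measure on $[0,1]$ (with the Borel $\sigma$-field), viewed as a probability space. *)

(* Defs.v *)
From HB Require Import structures.
From mathcomp Require Import all_boot all_order all_algebra.
From mathcomp Require Import all_classical all_reals all_analysis.
Set Implicit Arguments. Unset Strict Implicit. Unset Printing Implicit Defensive.
Import Order.TTheory GRing.Theory Num.Theory.
Import numFieldNormedType.Exports.
Local Open Scope classical_set_scope.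
Local Open Scope ring_scope.

(* Tent map on [0,1], extended to R with period 1: phi(x) := phi(x - [x]). *)
Definition tent {R : realType} (x : R) : R :=
  let y := x - (Num.floor x)%:~R in
  if y <= 2^-1 then 2 * y else 2 * (1 - y).

Definition tentn {R : realType} (n : nat) (x : R) : R := iter n tent x.

Definition tailsum {R : realType} (u : nat -> R) (N : nat) : R :=
  lim ((fun M : nat => \sum_(N <= n < M) u n) @ \oo).

Definition tentf {R : realType} (c : nat -> R) (x : R) : R :=
  tailsum (fun n => c n * tentn n x) 1.

Definition tentfN {R : realType} (c : nat -> R) (N : nat) (x : R) : R :=
  \sum_(1 <= n < N) c n * tentn n x.

(* Main.v *)
Require Import Defs.
From HB Require Import structures.
From mathcomp Require Import all_boot all_order all_algebra.
From mathcomp Require Import all_classical all_reals all_analysis.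
From mathcomp Require Import ring lra measurable_realfun.
Import Order.TTheory GRing.Theory Num.Theory.
Import numFieldNormedType.Exports.
Local Open Scope classical_set_scope.
Local Open Scope ring_scope.
Section P1.
Context {R : realType}.

Definition T0 (x : R) : R := 1 - `|2 * x - 1|.
Definition Tn (n : nat) : R -> R := iter n T0.

Lemma T0_cont : continuous T0.
Proof.
move=> x; apply: cvgB; first exact: cvg_cst.
apply: cvg_norm; apply: cvgB; last exact: cvg_cst.
apply: cvgZr; exact: cvg_id.
Qed.

Lemma Tn_cont n : continuous (Tn n).
Proof.
elim: n => [|n IH] /=; first by move=> x; exact: cvg_id.
move=> x; rewrite /Tn /=.
exact: (continuous_comp (IH x) (T0_cont _)).
Qed.

Lemma T0_01 x : 0 <= x <= 1 -> 0 <= T0 x <= 1.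
Proof.
move=> /andP[x0 x1]; rewrite /T0; apply/andP; split.
  rewrite subr_ge0 ler_norml; apply/andP; split; lra.
rewrite lerBlDr lerDl; exact: normr_ge0.
Qed.

Lemma tent_T0 x : 0 <= x <= 1 -> tent x = T0 x.
Proof.
move=> /andP[x0 x1]; rewrite /tent /T0.
have [x1'|x1'] := eqVneq x 1.
  subst x; have -> : Num.floor (1:R) = 1 by apply/eqP; rewrite floor_eq; lra.
  rewrite /= subrr ifT; last lra.
  rewrite mulr0 ger0_norm; lra.
have -> : Num.floor x = 0 by apply/eqP; rewrite floor_eq; apply/andP; split=> //=; lra.
rewrite subr0.
case: ifP => h.
  rewrite ler0_norm; lra.
rewrite ger0_norm; lra.
Qed.

Lemma Tn_01 n x : 0 <= x <= 1 -> 0 <= Tn n x <= 1.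
Proof.
elim: n => [|n IH] //= hx; rewrite /Tn /=; apply: T0_01; exact: IH.
Qed.

Lemma tentn_Tn n x : 0 <= x <= 1 -> tentn n x = Tn n x.
Proof.
move=> hx; elim: n => [|n IH] //=.
rewrite /tentn /Tn /= -/(tentn n x) IH tent_T0 //.
exact: Tn_01.
Qed.

End P1.

Section S.
Context {R : realType}.
Notation mu := (@lebesgue_measure R).

Lemma half_deriv : (fun x : R => x / 2)^`()%classic = cst (2^-1).
Proof.
apply/funext => x.
rewrite derive1Mr //. by rewrite derive1_id mul1r.
Qed.

Lemma subst_half (F : R -> R) : continuous F ->
  (\int[mu]_(x in `[0, 2^-1]) F x = \int[mu]_(x in `[0, 1]) (F (x / 2) / 2))%R.
Proof.
move=> cF.
have h := @integration_by_substitution_increasing R (fun x : R => x / 2) F 0 1.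
rewrite /Rintegral.
rewrite mul0r div1r in h.
have hd : ( *%R^~ (2^-1 : R))^`()%classic = cst (2^-1).
  exact: half_deriv.
rewrite h //; rewrite ?hd.
- by congr fine; apply: eq_integral => x _; rewrite /= hd.
- by move=> x y _ _ xy; rewrite ltr_pM2r.
- by idtac => x _; exact: cvg_cst.
- by idtac; exact: is_cvg_cst.
- by idtac; exact: is_cvg_cst.
- split.
  + by move=> x _; exact: derivableM.
  + apply: cvg_at_right_filter; apply: cvgMl; exact: cvg_id.
  + apply: cvg_at_left_filter; apply: cvgMl; exact: cvg_id.
- by move=> x; exact: (continuous_subspaceT cF).
Qed.

Lemma cont_int01 (G : R -> R) : continuous G -> mu.-integrable `[0, 1] (EFin \o G).
Proof.
move=> cG; apply: continuous_compact_integrable; first exact: segment_compact.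
exact: continuous_subspaceT.
Qed.
Arguments cont_int01 {G}.

Lemma cont_comp (F g : R -> R) : continuous F -> continuous g ->
  continuous (fun x => F (g x)).
Proof. by move=> cF cg x; exact: (continuous_comp (cg x) (cF (g x))). Qed.
Arguments cont_comp {F g}.

Lemma cont_half : continuous (fun x : R => x / 2).
Proof. by move=> x; apply: cvgMl; exact: cvg_id. Qed.

Lemma L1 (F : R -> R) : continuous F ->
  (\int[mu]_(x in `[0, 1]) F x = \int[mu]_(x in `[0, 1]) ((F (x / 2) + F (1 - x / 2)) / 2))%R.
Proof.
move=> cF.
have cF1 : continuous (fun x : R => F (1 - x)).
  move=> x; have h : {for x, continuous (fun x : R => 1 - x)}.
    by apply: cvgB; [exact: cvg_cst| exact: cvg_id].
  exact: (continuous_comp h (cF _)).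
have e1 := @Rintegral_itvB R F (BLeft 0) (BRight 1) (2^-1) (cont_int01 cF).
have /(_ _)/(_ _) e1' := e1.
rewrite !bnd_simp in e1'.
have {e1 e1'} e1 := e1' ltac:(lra) ltac:(lra).
rewrite Rintegral_itv_obnd_cbnd in e1; last first.
  apply: integrableS (cont_int01 cF) => //.
  by apply: subset_itvr; rewrite bnd_simp; lra.
have e2 := @Rintegration_by_substitution_onem R (fun x => F (1 - x)) (2^-1) ltac:(apply/andP; split; lra) (continuous_subspaceT cF1).
rewrite (_ : unstable.onem (2^-1 : R) = 2^-1) in e2; last by rewrite /unstable.onem; lra.
have e3 : (\int[mu]_(x in `[2^-1, 1]) F (1 - unstable.onem x) = \int[mu]_(x in `[2^-1, 1]) F x)%R.
  by apply: eq_Rintegral => x _; rewrite /unstable.onem; congr F; lra.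
rewrite e3 in e2.
have -> : (\int[mu]_(x in `[0, 1]) F x = 
  \int[mu]_(x in `[0, 2^-1]) F x + \int[mu]_(x in `[2^-1, 1]) F x)%R.
  by rewrite -e1 /= addrC subrK.
rewrite -e2.
rewrite !subst_half //.
rewrite -RintegralD //; last first.
- apply: cont_int01 => x; apply: cvgMl.
  by have := cont_comp cF1 cont_half x.
- apply: cont_int01 => x; apply: cvgMl.
  by have := cont_comp cF cont_half x.
by apply: eq_Rintegral => x _; rewrite mulrDl.
Qed.
End S.

Section P2.
Context {R : realType}.
Notation mu := (@lebesgue_measure R).
Arguments cont_int01 {R G}.
Arguments cont_comp {R F g}.

Lemma cont_sq (f : R -> R) : continuous f -> continuous (fun x => f x ^+ 2).
Proof. by move=> cf; exact: (cont_comp (@exprn_continuous R 2) cf). Qed.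

Definition J (F : R -> R) : R := (\int[mu]_(x in `[0, 1]) F x)%R.

Lemma JD (f g : R -> R) : continuous f -> continuous g ->
  J (fun x => f x + g x) = J f + J g.
Proof. by move=> cf cg; rewrite /J RintegralD //; [exact: cont_int01|exact: cont_int01]. Qed.

Lemma JB (f g : R -> R) : continuous f -> continuous g ->
  J (fun x => f x - g x) = J f - J g.
Proof. by move=> cf cg; rewrite /J RintegralB //; [exact: cont_int01|exact: cont_int01]. Qed.

Lemma JZ (f : R -> R) r : continuous f -> J (fun x => r * f x) = r * J f.
Proof. by move=> cf; rewrite /J RintegralZl //; exact: cont_int01. Qed.

Lemma Jcst r : J (fun _ => r) = r.
Proof.
rewrite /J Rintegral_cst //.
have h := @lebesgue_measure_itv R `[0%R, 1%R].
rewrite /= lte_fin ltr01 /= oppr0 adde0 in h.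
have -> : fine (mu `[0, 1]) = 1 by exact: (congr1 fine h).
by rewrite mulr1.
Qed.

Lemma Jext (f g : R -> R) : (forall x, 0 <= x <= 1 -> f x = g x) -> J f = J g.
Proof. by move=> h; apply: eq_Rintegral => x; rewrite inE /= in_itv /= => /h. Qed.

Lemma L2 (h : R -> R) : continuous h -> J (fun x => h (T0 x)) = J h.
Proof.
move=> ch; rewrite /J L1; last exact: (cont_comp ch T0_cont).
apply: Jext => x /andP[x0 x1].
have -> : T0 (x / 2) = x by rewrite /T0 ler0_norm; lra.
have -> : T0 (1 - x / 2) = x by rewrite /T0 ger0_norm; lra.
lra.
Qed.

Lemma L3 (h : R -> R) : continuous h -> J (fun x => (x - 2^-1) * h (T0 x)) = 0.
Proof.
move=> ch; rewrite /J L1; last first.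
  move=> x; apply: cvgM; last exact: (cont_comp ch T0_cont x).
  by apply: cvgB; [exact: cvg_id|exact: cvg_cst].
rewrite -[RHS](Jcst 0); apply: Jext => x /andP[x0 x1].
have -> : T0 (x / 2) = x by rewrite /T0 ler0_norm; lra.
have -> : T0 (1 - x / 2) = x by rewrite /T0 ger0_norm; lra.
lra.
Qed.

Lemma L4 (h : R -> R) n : continuous h -> J (fun x => h (Tn n x)) = J h.
Proof.
elim: n h => [|n IH] h ch //=.
have -> : (fun x => h (Tn n.+1 x)) = (fun x => (fun y => h (Tn n y)) (T0 x)).
  by apply/funext => x; rewrite /Tn iterSr.
rewrite (L2 (fun y => h (Tn n y))) ?IH //.
exact: (cont_comp ch (Tn_cont n)).
Qed.

Definition psi n x : R := Tn n x - 2^-1.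

Lemma psi_cont n : continuous (psi n).
Proof. by move=> x; apply: cvgB; [exact: Tn_cont|exact: cvg_cst]. Qed.

Lemma L5 m n : (m < n)%N -> J (fun x => psi m x * psi n x) = 0.
Proof.
move=> mn; have [k ->] : exists k, n = (k.+1 + m)%N.
  by exists (n - m.+1)%N; rewrite addSn -addnS subnK.
have -> : (fun x => psi m x * psi (k.+1 + m) x) =
   (fun x => (fun y => (y - 2^-1) * psi k (T0 y)) (Tn m x)).
  by apply/funext => x; rewrite /psi /Tn iterD iterSr.
rewrite (L4 (fun y => (y - 2^-1) * psi k (T0 y)) m); first exact: L3 (psi_cont k).
move=> x; apply: cvgM.
  by apply: cvgB; [exact: cvg_id|exact: cvg_cst].
exact: (cont_comp (psi_cont k) T0_cont x).
Qed.

Definition V : R := J (fun x => (x - 2^-1) ^+ 2).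

Lemma L6 n : J (fun x => psi n x ^+ 2) = V.
Proof.
rewrite /V -(L4 (fun y => (y - 2^-1) ^+ 2) n) //.
have cid : continuous (fun x : R => x - 2^-1).
  by move=> x; apply: cvgB; [exact: cvg_id|exact: cvg_cst].
exact: cont_sq.
Qed.

Lemma V_val : V = 12^-1.
Proof.
have cid : continuous (fun x : R => x - 2^-1).
  by move=> x; apply: cvgB; [exact: cvg_id|exact: cvg_cst].
have csq : continuous (fun x : R => (x - 2^-1) ^+ 2).
  exact: cont_sq.
have e0 : J (fun x => x - 2^-1) = 0.
  rewrite -[RHS](L3 (fun _ => 1)); last by move=> ?; exact: cvg_cst.
  by apply: Jext => x _; rewrite mulr1.
have e1 : V = J (fun x => 4^-1 * ((x - 2^-1) ^+ 2 - (x - 2^-1) + 4^-1)).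
  rewrite /V {1}/J L1 //; apply: Jext => x _; lra.
rewrite JZ in e1; last first.
  by move=> x; apply: cvgD; [apply: cvgB; [exact: csq|exact: cid]|exact: cvg_cst].
rewrite JD in e1; last 2 first.
  by move=> x; apply: cvgB; [exact: csq|exact: cid].
  by move=> x; exact: cvg_cst.
rewrite JB // e0 Jcst -/V in e1.
lra.
Qed.

End P2.

Section P3.
Context {R : realType}.
Notation mu := (@lebesgue_measure R).
Arguments cont_int01 {R G}.
Arguments cont_comp {R F g}.
Arguments psi_cont {R}.
Arguments cont_sq {R f}.

Lemma sum_rec (F : nat -> R) N M :
  \sum_(N <= n < M.+1) F n = \sum_(N <= n < M) F n + (if (N <= M)%N then F M else 0).
Proof.
case: leqP => h; first by rewrite big_nat_recr.
by rewrite !big_geq ?addr0 // ltnW.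
Qed.

Variable c : nat -> R.

Definition S N M (x : R) : R := \sum_(N <= n < M) c n * psi n x.

Lemma S_rec N M : S N M.+1 = fun x => S N M x + (if (N <= M)%N then c M * psi M x else 0).
Proof.
apply/funext => x; rewrite /S sum_rec; congr (_ + _); by case: ifP.
Qed.

Lemma S0 N : S N 0 = fun _ => 0.
Proof. by apply/funext => x; rewrite /S big_geq. Qed.

Lemma S_cont N M : continuous (S N M).
Proof.
elim: M => [|M IH]; first by rewrite S0 => x; exact: cvg_cst.
rewrite S_rec => x; apply: cvgD; first exact: IH.
case: ifP => _; last exact: cvg_cst.
by apply: cvgMr; exact: psi_cont.
Qed.

Lemma L8 N M k : (M <= k)%N -> J (fun x => S N M x * psi k x) = 0.
Proof.
elim: M => [|M IH] hk.
  by rewrite S0 -[RHS](Jcst 0); apply: Jext => x _; rewrite mul0r.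
rewrite S_rec.
have -> : (fun x => (S N M x + (if (N <= M)%N then c M * psi M x else 0)) * psi k x)
  = (fun x => S N M x * psi k x + (if (N <= M)%N then c M * (psi M x * psi k x) else 0)).
  by apply/funext => x; case: ifP => _; rewrite mulrDl ?mulrA ?mul0r.
rewrite JD; last 2 first.
- by move=> x; apply: cvgM; [exact: S_cont|exact: psi_cont].
- case: (N <= M)%N => x; last exact: cvg_cst.
  by apply: cvgMr; apply: cvgM; exact: psi_cont.
rewrite IH; last exact: ltnW.
case: (N <= M)%N; last by rewrite Jcst addr0.
rewrite JZ ?L5 ?mulr0 ?addr0 //.
by move=> x; apply: cvgM; exact: psi_cont.
Qed.

Lemma L9 N M : J (fun x => S N M x ^+ 2) = V * \sum_(N <= n < M) c n ^+ 2.
Proof.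
elim: M => [|M IH].
  by rewrite S0 big_geq // mulr0 -[RHS](Jcst 0); apply: Jext => x _; rewrite expr0n.
rewrite S_rec sum_rec.
case hNM : (N <= M)%N; last first.
  by rewrite addr0 -IH; apply: Jext => x _; rewrite addr0.
have -> : (fun x => (S N M x + c M * psi M x) ^+ 2)
  = (fun x => (S N M x ^+ 2 + (2 * c M) * (S N M x * psi M x)) + c M ^+ 2 * psi M x ^+ 2).
  by apply/funext => x; rewrite sqrrD; ring.
have cS := S_cont N M.
have cP : continuous (@psi R M) := psi_cont M.
rewrite JD; last 2 first.
- move=> x; apply: cvgD; first by have := cont_sq cS x.
  by apply: cvgMr; apply: cvgM; [exact: cS|exact: cP].
- by move=> x; apply: cvgMr; by have := cont_sq cP x.
rewrite JD; last 2 first.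
- exact: (cont_sq cS).
- by move=> x; apply: cvgMr; apply: cvgM; [exact: cS|exact: cP].
rewrite JZ; last by move=> x; apply: cvgM; [exact: cS|exact: cP].
rewrite JZ; last exact: (cont_sq cP).
by rewrite IH L8 // L6 mulr0 addr0 mulrDr [c M ^+ 2 * _]mulrC.
Qed.

End P3.

Section P4.
Context {R : realType}.
Notation mu := (@lebesgue_measure R).
Arguments cont_int01 {R G}.
Arguments cont_comp {R F g}.
Arguments psi_cont {R}.
Arguments cont_sq {R f}.

Variable c : nat -> R.
Hypothesis habs : cvg ((fun M : nat => \sum_(1 <= n < M) `|c n|) @ \oo).

Let P M := \sum_(1 <= n < M) `|c n|.
Definition L := lim (P @ \oo).

Lemma P_homo : {homo P : n m / (n <= m)%N >-> n <= m}.
Proof.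
move=> n m nm; rewrite /P.
have [n1|n1] := leqP 1 n.
  rewrite (big_cat_nat n1 nm) /= lerDl; apply: sumr_ge0 => i _; exact: normr_ge0.
rewrite [X in X <= _]big_geq; last exact: ltnW.
apply: sumr_ge0 => i _; exact: normr_ge0.
Qed.

Lemma P_le M : P M <= L.
Proof. exact: (nondecreasing_cvgn_le P_homo habs). Qed.

Lemma L_ge0 : 0 <= L.
Proof. by apply: le_trans (P_le 0); rewrite /P big_geq. Qed.

Lemma tail_le N M : (1 <= N)%N -> \sum_(N <= n < M) `|c n| <= L.
Proof.
move=> N1; apply: le_trans (P_le M); rewrite /P.
have [NM|MN] := leqP N M.
  rewrite (big_cat_nat N1 NM) /= lerDr; apply: sumr_ge0 => i _; exact: normr_ge0.
rewrite big_geq; last exact: ltnW.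
apply: sumr_ge0 => i _; exact: normr_ge0.
Qed.

Lemma c_le n : (1 <= n)%N -> `|c n| <= L.
Proof.
by move=> n1; have := tail_le n n.+1 n1; rewrite big_nat1.
Qed.

Lemma nonneg_cvg (p : nat -> R) (K : R) N : (1 <= N)%N ->
  (forall n, 0 <= p n) -> (forall n, (N <= n)%N -> p n <= K * `|c n|) -> 0 <= K ->
  cvg ((fun M => \sum_(N <= n < M) p n) @ \oo).
Proof.
move=> N1 p0 pK K0; apply: nondecreasing_is_cvgn.
  move=> n m nm.
  have [Nn|nN] := leqP N n.
    rewrite (big_cat_nat Nn nm) /= lerDl; exact: sumr_ge0.
  rewrite [X in X <= _]big_geq; last exact: ltnW.
  exact: sumr_ge0.
exists (K * L) => _ [M _ <-].
apply: le_trans (_ : \sum_(N <= n < M) K * `|c n| <= _).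
  rewrite big_nat_cond [X in _ <= X]big_nat_cond; apply: ler_sum => i /andP[/andP[Ni _] _].
  exact: pK.
by rewrite -mulr_sumr; apply: ler_wpM2l => //; exact: tail_le.
Qed.

Lemma tail_cvg (u : nat -> R) (K : R) N : (1 <= N)%N -> 0 <= K ->
  (forall n, (N <= n)%N -> `|u n| <= K * `|c n|) ->
  cvg ((fun M => \sum_(N <= n < M) u n) @ \oo).
Proof.
move=> N1 K0 uK.
have e : (fun M => \sum_(N <= n < M) u n) =
  (fun M => \sum_(N <= n < M) ((`|u n| + u n) / 2) - \sum_(N <= n < M) ((`|u n| - u n) / 2)).
  apply/funext => M; rewrite -sumrB; apply: eq_bigr => i _; lra.
rewrite e; apply: is_cvgB.
  apply: (nonneg_cvg _ K) => // n.
    have := ler_norm (u n); have := ler_norm (- u n); rewrite normrN; lra.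
  move=> Nn; have := uK _ Nn; have := ler_norm (u n); lra.
apply: (nonneg_cvg _ K) => // n.
  have := ler_norm (u n); rewrite -normrN; have := ler_norm (- u n); lra.
move=> Nn; have := uK _ Nn; have := ler_norm (- u n); rewrite normrN; lra.
Qed.

End P4.

Section P5.
Context {R : realType}.
Notation mu := (@lebesgue_measure R).
Arguments cont_int01 {R G}.
Arguments cont_comp {R F g}.
Arguments psi_cont {R}.
Arguments cont_sq {R f}.

Variable c : nat -> R.
Arguments tail_le {R c}.
Arguments tail_cvg {R c}.
Hypothesis habs : cvg ((fun M : nat => \sum_(1 <= n < M) `|c n|) @ \oo).

Lemma psi_bound n (x : R) : 0 <= x <= 1 -> `|psi n x| <= 1.
Proof.
move=> /(Tn_01 n) /andP[h0 h1]; rewrite /psi ler_norml; apply/andP; split; lra.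
Qed.

Lemma S_bound N M (x : R) : (1 <= N)%N -> 0 <= x <= 1 -> `|S c N M x| <= L c.
Proof.
move=> N1 hx; apply: le_trans (tail_le habs N M N1).
rewrite /S; apply: le_trans; first exact: ler_norm_sum.
apply: ler_sum => n _; rewrite normrM.
by apply: ler_piMr => //; exact: psi_bound.
Qed.

Lemma S_cvg N (x : R) : (1 <= N)%N -> 0 <= x <= 1 ->
  (fun M => S c N M x) @ \oo --> tentf c x - tentfN c N x - 2^-1 * tailsum c N.
Proof.
move=> N1 hx.
have cvP : (fun M => \sum_(1 <= n < M) c n * tentn n x) @ \oo --> tentf c x.
  apply: (tail_cvg habs _ 1) => // n _.
  rewrite normrM mul1r tentn_Tn //; apply: ler_piMr => //.
  by have /andP[h0 h1] := Tn_01 n x hx; rewrite ger0_norm.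
have cvQ : (fun M => \sum_(N <= n < M) c n) @ \oo --> tailsum c N.
  by apply: (tail_cvg habs _ 1) => // n _; rewrite mul1r.
have key : (fun M => (\sum_(1 <= n < M) c n * tentn n x - tentfN c N x)
     - 2^-1 * \sum_(N <= n < M) c n) @ \oo
   --> tentf c x - tentfN c N x - 2^-1 * tailsum c N.
  apply: cvgB; [apply: cvgB; [exact: cvP|exact: cvg_cst]|apply: cvgMr; exact: cvQ].
apply: cvg_trans key.
apply: near_eq_cvg; exists N => // M /= NM.
rewrite (big_cat_nat N1 NM) /= /tentfN addrC addrK.
rewrite /S /psi mulr_sumr -sumrB; apply: eq_bigr => n _.
by rewrite tentn_Tn // mulrBr mulrC [c n * _]mulrC.
Qed.

End P5.

Section P6.
Context {R : realType}.
Notation mu := (@lebesgue_measure R).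
Arguments cont_int01 {R G}.
Arguments cont_comp {R F g}.
Arguments psi_cont {R}.
Arguments cont_sq {R f}.

Lemma JE (f : R -> R) : continuous f ->
  (\int[mu]_(x in `[0%R, 1%R]) (f x)%:E)%E = (J f)%:E.
Proof.
move=> cf; rewrite /J /Rintegral fineK //.
apply: integrable_fin_num => //; exact: cont_int01.
Qed.

Variable c : nat -> R.
Arguments tail_le {R c}.
Arguments tail_cvg {R c}.
Arguments S_cvg {R c}.
Arguments S_bound {R c}.
Hypothesis habs : cvg ((fun M : nat => \sum_(1 <= n < M) `|c n|) @ \oo).

Lemma key N : (1 <= N)%N -> tailsum c N != 0 ->
  (\int[mu]_(x in `[0%R, 1%R])
     (((tentf c x - tentfN c N x) / (2^-1 * tailsum c N) - 1) ^+ 2)%:E)%E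
  = ((2^-1 * tailsum c N) ^- 2 * (V * tailsum (fun n => c n ^+ 2) N))%:E.
Proof.
move=> N1 A0.
set a := 2^-1 * tailsum c N.
have a0 : a != 0 by rewrite /a mulf_neq0 // invr_eq0.
have cS M : continuous (fun x => (S c N M x / a) ^+ 2).
  by apply: cont_sq => x; apply: cvgMl; exact: S_cont.
pose f_ (M : nat) (x : R) := ((S c N M x / a) ^+ 2)%:E.
pose f (x : R) := (((tentf c x - tentfN c N x) / a - 1) ^+ 2)%:E.
pose B := (L c / a) ^+ 2.
pose D : set R := (`[0%R, 1%R])%classic.
have pt : forall x, 0 <= x <= 1 -> (fun M => (S c N M x / a) ^+ 2) @ \oo -->
    ((tentf c x - tentfN c N x) / a - 1) ^+ 2.
  move=> x hx.
  have h := S_cvg habs N x N1 hx.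
  have -> : (tentf c x - tentfN c N x) / a - 1 =
    (tentf c x - tentfN c N x - 2^-1 * tailsum c N) / a.
    by rewrite -/a [RHS]mulrBl divff.
  apply: cvgM; apply: cvgMl; exact: h.
have mf_ : forall M, measurable_fun D (f_ M).
  move=> M; apply/measurable_EFinP.
  exact: (measurable_funS _ _ (continuous_measurable_fun (cS M))).
have mf : measurable_fun D f.
  apply/measurable_EFinP.
  apply: (measurable_fun_cvg (h := fun M x => (S c N M x / a) ^+ 2)).
    move=> M; exact: (measurable_funS _ _ (continuous_measurable_fun (cS M))).
  by move=> x; rewrite /D /= in_itv /= => hx; exact: pt.
have f_f : {ae mu, forall x, D x -> f_ ^~ x @ \oo --> f x}.
  apply: aeW => x; rewrite /D /= in_itv /= => hx.
  apply: cvg_EFin; first by apply: nearW.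
  exact: pt.
have ig : mu.-integrable D (fun _ => B%:E).
  by apply: (cont_int01 (G := fun _ => B)) => x; exact: cvg_cst.
have f_g : {ae mu, forall x M, D x -> (`|f_ M x| <= B%:E)%E}.
  apply: aeW => x M; rewrite /D /= in_itv /= => hx.
  rewrite /f_ /B lee_fin ger0_norm ?sqr_ge0 // !exprMn.
  apply: ler_wpM2r; first exact: sqr_ge0.
  have := S_bound habs N M x N1 hx; rewrite ler_norml => /andP[h1 h2].
  nra.
have [_ _ H] := @dominated_convergence _ _ _ mu D (measurable_itv _) f_ f (fun _ => B%:E) mf_ mf f_f ig f_g.
have H2 : (fun M => (\int[mu]_(x in `[0%R, 1%R]) f_ M x)%E) @ \oo -->
    (a ^- 2 * (V * tailsum (fun n => c n ^+ 2) N))%:E.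
  have -> : (fun M => (\int[mu]_(x in `[0%R, 1%R]) f_ M x)%E) =
    (fun M => (a ^- 2 * (V * \sum_(N <= n < M) c n ^+ 2))%:E).
    apply/funext => M; rewrite /f_ JE //; congr EFin.
    rewrite -L9 -JZ; last exact: cont_sq (S_cont c N M).
    by apply: Jext => x _; rewrite exprMn exprVn mulrC.
  apply: cvg_EFin; first by apply: nearW.
  apply: cvgMr; apply: cvgMr.
  apply: (tail_cvg habs _ (L c)) => //; first exact: L_ge0.
  move=> n Nn; rewrite normrX expr2; apply: ler_wpM2r => //.
  by apply: (c_le c habs n); exact: leq_trans N1 Nn.
have H' : (fun M => (\int[mu]_(x in D) f_ M x)%E) @ \oo --> (\int[mu]_(x in D) f x)%E := H.
have E := @cvg_unique _ (@ereal_hausdorff R) _ _ _ _ H' H2.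
rewrite -E //; exact: fmap_proper_filter.
Qed.
End P6.

Section P7.
Context {R : realType}.
Notation mu := (@lebesgue_measure R).
Arguments cont_int01 {R G}.
Arguments cont_comp {R F g}.
Arguments psi_cont {R}.
Arguments cont_sq {R f}.

Variable c : nat -> R.
Arguments tail_le {R c}.
Arguments tail_cvg {R c}.
Arguments S_cvg {R c}.
Arguments S_bound {R c}.
Arguments key {R c}.
Hypothesis habs : cvg ((fun M : nat => \sum_(1 <= n < M) `|c n|) @ \oo).

Definition W N (x : R) := (tentf c x - tentfN c N x) / (2^-1 * tailsum c N) - 1.

Lemma W_cvg N x : (1 <= N)%N -> tailsum c N != 0 -> 0 <= x <= 1 ->
  (fun M => S c N M x / (2^-1 * tailsum c N)) @ \oo --> W N x.
Proof.
move=> N1 A0 hx.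
have a0 : 2^-1 * tailsum c N != 0 by rewrite mulf_neq0 // invr_eq0.
have -> : W N x = (tentf c x - tentfN c N x - 2^-1 * tailsum c N) / (2^-1 * tailsum c N).
  by rewrite /W [RHS]mulrBl divff.
apply: cvgMl; exact: S_cvg.
Qed.

Let D : set R := (`[0%R, 1%R])%classic.

Lemma W_meas N : (1 <= N)%N -> tailsum c N != 0 -> measurable_fun D (W N).
Proof.
move=> N1 A0.
apply: (measurable_fun_cvg (h := fun M x => S c N M x / (2^-1 * tailsum c N))).
  move=> M; apply: (measurable_funS _ _ (continuous_measurable_fun _)) => //.
  by move=> x; apply: cvgMl; exact: S_cont.
by move=> x; rewrite /D /= in_itv /= => hx; exact: W_cvg.
Qed.

Lemma W2_meas N : (1 <= N)%N -> tailsum c N != 0 -> measurable_fun D (fun x => W N x ^+ 2).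
Proof.
move=> N1 A0.
apply: (measurable_fun_cvg (h := fun M x => (S c N M x / (2^-1 * tailsum c N)) ^+ 2)).
  move=> M; apply: (measurable_funS _ _ (continuous_measurable_fun _)) => //.
  by apply: cont_sq => x; apply: cvgMl; exact: S_cont.
move=> x; rewrite /D /= in_itv /= => hx.
have h := W_cvg N x N1 A0 hx.
rewrite expr2.
have -> : (fun M => (S c N M x / (2^-1 * tailsum c N)) ^+ 2) =
  (fun M => (S c N M x / (2^-1 * tailsum c N)) * (S c N M x / (2^-1 * tailsum c N))).
  by apply/funext => M; rewrite expr2.
exact: cvgM.
Qed.

Lemma muD : mu D = 1%E.
Proof.
have h := @lebesgue_measure_itv R `[0%R, 1%R].
by rewrite /= lte_fin ltr01 /= oppr0 adde0 in h.
Qed.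


Lemma Ebound N eps : (1 <= N)%N -> tailsum c N != 0 -> 0 < eps ->
  let E := [set x : R | x \in `[0%R, 1%R] ] `&`
           [set x : R | 1 - eps <= (tentf c x - tentfN c N x) / (2^-1 * tailsum c N)
                        <= 1 + eps] in
  let q := (2^-1 * tailsum c N) ^- 2 * (V * tailsum (fun n => c n ^+ 2) N) in
  mu E = (fine (mu E))%:E /\ 1 - q / eps ^+ 2 <= fine (mu E) <= 1.
Proof.
move=> N1 A0 e0 E q.
have mD : measurable D by exact: measurable_itv.
have EE : E = D `&` (W N) @^-1` `[- eps, eps].
  apply/seteqP; split => x /= [hx h]; split => //; rewrite ?in_itv /= /W in h *; lra.
have mE : measurable E by rewrite EE; exact: (W_meas N N1 A0 mD _ (measurable_itv _)).
pose Bad := D `&` [set x | ((eps ^+ 2)%:E <= `|((W N x) ^+ 2)%:E|)%E].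
have BE : Bad = D `&` (fun x => W N x ^+ 2) @^-1` `[eps ^+ 2, +oo[.
  apply/seteqP; split => x /= [hx h]; split => //; rewrite ?in_itv /= in h *.
    by rewrite andbT; move: h; rewrite lee_fin ger0_norm // sqr_ge0.
  by rewrite lee_fin ger0_norm ?sqr_ge0 //; move: h; rewrite andbT.
have mB : measurable Bad by rewrite BE; exact: (W2_meas N N1 A0 mD _ (measurable_itv _)).
have cheb := @le_integral_comp_abse _ _ _ mu D mD (fun x => ((W N x) ^+ 2)%:E) (eps ^+ 2) id
  (@measurable_id _ _ _) (fun r h => h) (fun x y _ _ h => h).
have /cheb {}cheb : measurable_fun D (fun x => ((W N x) ^+ 2)%:E).
  by apply/measurable_EFinP; exact: W2_meas.
have {}cheb := cheb (exprn_gt0 2 e0).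
rewrite -/Bad /= in cheb.
have I1 : (\int[mu]_(x in D) `|((W N x) ^+ 2)%:E|)%E = q%:E.
  rewrite -(key habs N N1 A0); apply: eq_integral => x _.
  by rewrite /= ger0_norm // sqr_ge0.
rewrite I1 in cheb.
have ED : E `<=` D by move=> x [].
have BD : Bad `<=` D by move=> x [].
have DEB : D `<=` E `|` Bad.
  move=> x Dx; have := Dx; rewrite /D /= in_itv /= => hx.
  have [h|h] := boolP (1 - eps <= (tentf c x - tentfN c N x) / (2^-1 * tailsum c N) <= 1 + eps).
    by left; split.
  right; split => //=; rewrite lee_fin ger0_norm ?sqr_ge0 //.
  move: h; rewrite /W negb_and -!ltNge => /orP[h|h]; nra.
have muE1 : (mu E <= 1)%E by rewrite -muD; apply: le_measure => //; rewrite inE.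
have muB1 : (mu Bad <= 1)%E by rewrite -muD; apply: le_measure => //; rewrite inE.
have sub : (1 <= mu E + mu Bad)%E.
  rewrite -muD; apply: (le_trans _ (measureU2 mu mE mB)).
  apply: le_measure => //; rewrite inE //; exact: measurableU.
have fE : mu E \is a fin_num by rewrite ge0_fin_numE ?measure_ge0 // (le_lt_trans muE1) ?ltry.
have fB : mu Bad \is a fin_num by rewrite ge0_fin_numE ?measure_ge0 // (le_lt_trans muB1) ?ltry.
have eE := fineK fE; have eB := fineK fB.
split => //.
rewrite -eE lee_fin in muE1.
rewrite -eE -eB -EFinD lee_fin in sub.
rewrite -eB -EFinM lee_fin in cheb.
have b0 : 0 <= fine (mu Bad) by rewrite fine_ge0 ?measure_ge0.
have hb : fine (mu Bad) <= q / eps ^+ 2.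
  by rewrite ler_pdivlMr ?exprn_gt0 // mulrC.
apply/andP; split => //; lra.
Qed.

End P7.

Arguments key {R c}.
Arguments Ebound {R c}.

Theorem theorem1p1 (R : realType) (c : nat -> R)
  (habs : cvg ((fun M : nat => \sum_(1 <= n < M) `|c n|) @ \oo))
  (hsq : forall N : nat, (1 <= N)%N -> 0 < tailsum (fun n => c n ^+ 2) N)
  (hnz : forall N : nat, (1 <= N)%N -> tailsum c N != 0) :
  (((fun N : nat =>
       (\int[lebesgue_measure]_(x in `[0%R, 1%R])
          (((tentf c x - tentfN c N x) / (2^-1 * tailsum c N) - 1) ^+ 2)%:E)%E)
      @ \oo --> 0%E)
   <->
   ((fun N : nat => tailsum (fun n => c n ^+ 2) N / (tailsum c N) ^+ 2)
      @ \oo --> 0))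
  /\
  (((fun N : nat => tailsum (fun n => c n ^+ 2) N / (tailsum c N) ^+ 2)
      @ \oo --> 0) ->
   forall eps : R, 0 < eps ->
     (fun N : nat =>
        lebesgue_measure
          ([set x : R | x \in `[0%R, 1%R] ] `&`
           [set x : R | 1 - eps <= (tentf c x - tentfN c N x) / (2^-1 * tailsum c N)
                        <= 1 + eps]))
       @ \oo --> 1%E).
Proof.
pose r N := tailsum (fun n => c n ^+ 2) N / (tailsum c N) ^+ 2.
have qE N : (1 <= N)%N ->
    (2^-1 * tailsum c N) ^- 2 * (V * tailsum (fun n => c n ^+ 2) N) = 3^-1 * r N.
  move=> N1; have A0 := hnz N N1; rewrite /r V_val.
  by field.
split.
  split => H.
    have H1 : (fun N => (3^-1 * r N)%:E) @ \oo --> 0%E.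
      apply: cvg_trans H; apply: near_eq_cvg; exists 1%N => // N /= N1.
      by rewrite (key habs N N1 (hnz N N1)) qE.
    have H2 := fine_cvg H1.
    have H3 : (fun N => 3 * (3^-1 * r N)) @ \oo --> 0.
      by rewrite -(mulr0 3); apply: cvgMr; exact: H2.
    apply: cvg_trans H3; apply: near_eq_cvg; apply: nearW => N /=.
    by rewrite mulrA divff ?mul1r // pnatr_eq0.
  have H1 : (fun N => (3^-1 * r N)%:E) @ \oo --> 0%E.
    apply: cvg_EFin; first by apply: nearW.
    rewrite -(mulr0 (3^-1)); apply: cvgMr; exact: H.
  apply: cvg_trans H1; apply: near_eq_cvg; exists 1%N => // N /= N1.
  by rewrite (key habs N N1 (hnz N N1)) qE.
move=> H eps e0.
apply: cvg_EFin.
  exists 1%N => // N /= N1.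
  by have [-> _] := Ebound habs N eps N1 (hnz N N1) e0.
have low : (fun N => 1 - 3^-1 * r N / eps ^+ 2) @ \oo --> (1 : R).
  rewrite -[X in _ --> X]subr0; apply: cvgB; first exact: cvg_cst.
  rewrite -(mul0r (eps ^+ 2)^-1); apply: cvgMl.
  rewrite -(mulr0 (3^-1)); apply: cvgMr; exact: H.
apply: (squeeze_cvgr _ low (cvg_cst (1 : R))).
exists 1%N => // N /= N1.
have [_ h] := Ebound habs N eps N1 (hnz N N1) e0.
by rewrite -qE.
Qed.
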